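(* Let $(\mathcal M,\mathrm d_{\mathcal M})$ be a metric space with finite doubling constant $\lambda_{\mathcal M}$, let $m\ge1$, $r>0$ and $p=p_1,\dots,p_m\in\mathcal M^m$. Then the discrete Fréchet ball $\{q\in\mathcal M^m:\mathrm d_{dF}(p,q)\le r\}$ can be covered by at most $(4\lambda_{\mathcal M})^m$ sets of the form $\{q\in\mathcal M^m:\mathrm d_{dF}(c,q)\le r/2\}$ with $c\in\mathcal M^m$.
   Context: A curve of complexity $m$ in a metric space $(\mathcal M,\mathrm d_{\mathcal M})$ is a sequence $p=p_1,\dots,p_m$ of points of $\mathcal M$; $\mathcal M^m$ denotes the set of such curves. For $p\in\mathcal M^m$ and $q\in\mathcal M^k$, a traversal of $p$ and $q$ is a sequence of index pairs $(i_1,j_1),\dots,(i_t,j_t)$ with $(i_1,j_1)=(1,1)$, $(i_t,j_t)=(m,k)$, and for every $u<t$: $i_{u+1}-i_u\in\{0,1\}$, $j_{u+1}-j_u\in\{0,1\}$ and $(i_{u+1}-i_u)+(j_{u+1}-j_u)\ge 1$. Its cost is $\max_u \mathrm d_{\mathcal M}(p_{i_u},q_{j_u})$. The discrete Fréchet distance $\mathrm d_{dF}(p,q)$ is the minimum cost over all traversals of $p$ and $q$. The doubling constant $\lambda_{\mathcal M}$ of $\mathcal M$ is the smallest integer such that for every $x\in\mathcal M$ and $r>0$ the ball $\{y:\mathrm d_{\mathcal M}(x,y)\le r\}$ can be covered by at most $\lambda_{\mathcal M}$ balls of radius $r/2$ centered at points of $\mathcal M$. *)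

(* Defs.v *)
(* real-valued metric, curves as lists (0-based indices). *)
From Stdlib Require Import Reals List Lia Lra.
Import ListNotations.
Open Scope R_scope.

Definition is_metric {T : Type} (d : T -> T -> R) : Prop :=
  (forall x y, 0 <= d x y) /\
  (forall x y, d x y = 0 <-> x = y) /\
  (forall x y, d x y = d y x) /\
  (forall x y z, d x z <= d x y + d y z).

Definition doubling_bound {T : Type} (d : T -> T -> R) (lam : nat) : Prop :=
  forall (x : T) (r : R), 0 < r ->
    exists cs : list T, (length cs <= lam)%nat /\
      forall y, d x y <= r -> exists c, In c cs /\ d c y <= r / 2.

Definition is_doubling_constant {T : Type} (d : T -> T -> R) (lam : nat) : Prop :=
  doubling_bound d lam /\ forall k, doubling_bound d k -> (lam <= k)%nat.

Definition is_traversal {T : Type} (p q : list T) (t : list (nat * nat)) : Prop :=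
  t <> [] /\
  nth 0 t (0%nat, 0%nat) = (0%nat, 0%nat) /\
  nth (length t - 1) t (0%nat, 0%nat) = (length p - 1, length q - 1)%nat /\
  forall u, (S u < length t)%nat ->
    let (i, j) := nth u t (0%nat, 0%nat) in
    let (i', j') := nth (S u) t (0%nat, 0%nat) in
    (i' = i \/ i' = S i) /\ (j' = j \/ j' = S j) /\ (i' + j' >= i + j + 1)%nat.

(* distance between p_i and q_j (indices of a traversal are always in range;
   the out-of-range value 0 is never used) *)
Definition pt_dist {T : Type} (d : T -> T -> R) (p q : list T) (ij : nat * nat) : R :=
  match nth_error p (fst ij), nth_error q (snd ij) with
  | Some a, Some b => d a b
  | _, _ => 0
  end.

(* cost = max over the pairs of t (distances are >= 0, t nonempty) *)
Definition traversal_cost {T : Type} (d : T -> T -> R)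
  (p q : list T) (t : list (nat * nat)) : R :=
  fold_right Rmax 0 (map (pt_dist d p q) t).

Definition is_dF {T : Type} (d : T -> T -> R) (p q : list T) (x : R) : Prop :=
  (exists t, is_traversal p q t /\ traversal_cost d p q t = x) /\
  (forall t, is_traversal p q t -> x <= traversal_cost d p q t).

Definition dF_le {T : Type} (d : T -> T -> R) (p q : list T) (r : R) : Prop :=
  exists x, is_dF d p q x /\ x <= r.

(* Main.v *)
Require Import Defs.
From Stdlib Require Import Reals List Lia Lra Classical ClassicalEpsilon.
Import ListNotations.
Open Scope R_scope.
Fixpoint all_seqs {A : Type} (xs : list A) (n : nat) : list (list A) :=
  match n with
  | O => [[]]
  | S n' => flat_map (fun x => map (cons x) (all_seqs xs n')) xs
  end.

Lemma flat_map_len {A B : Type} (f : A -> list B) (k : nat) (l : list A) :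
  (forall x, length (f x) = k) -> length (flat_map f l) = (length l * k)%nat.
Proof.
  intro H; induction l as [|a l IH]; simpl; auto.
  rewrite length_app, H, IH; lia.
Qed.

Lemma all_seqs_len {A : Type} (xs : list A) n : length (all_seqs xs n) = (length xs ^ n)%nat.
Proof.
  induction n; simpl; auto.
  rewrite (flat_map_len _ (length xs ^ n)%nat); auto.
  intro; rewrite length_map; auto.
Qed.

Lemma all_seqs_in {A : Type} (xs : list A) : forall l n, length l = n ->
  (forall x, In x l -> In x xs) -> In l (all_seqs xs n).
Proof.
  induction l as [|a l IH]; intros n Hn H; subst; simpl; auto.
  apply in_flat_map. exists a; split; [apply H; left; auto|].
  apply in_map. apply IH; auto. intros; apply H; right; auto.
Qed.

Fixpoint decode (a : nat) (bs : list bool) : list nat :=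
  match bs with
  | [] => []
  | true :: bs' => a :: decode a bs'
  | false :: bs' => decode (S a) bs'
  end.

Lemma decode_pad : forall bs a n, decode a (bs ++ repeat false n) = decode a bs.
Proof.
  induction bs as [|b bs IH]; intros a n; simpl.
  - revert a; induction n; simpl; auto.
  - destruct b; rewrite IH; auto.
Qed.

Definition step_ok (x y : nat * nat) : Prop :=
  let (i, j) := x in
  let (i', j') := y in
  (i' = i \/ i' = S i) /\ (j' = j \/ j' = S j) /\ (i' + j' >= i + j + 1)%nat.

Fixpoint chain (x : nat * nat) (rest : list (nat * nat)) : Prop :=
  match rest with
  | [] => True
  | y :: rest' => step_ok x y /\ chain y rest'
  end.

Lemma nth_chain : forall rest x,
  (forall u, (S u < length (x :: rest))%nat ->
     step_ok (nth u (x :: rest) (0%nat, 0%nat)) (nth (S u) (x :: rest) (0%nat, 0%nat))) ->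
  chain x rest.
Proof.
  induction rest as [|y rest IH]; intros x H; simpl; auto.
  split.
  - apply (H 0%nat); simpl; lia.
  - apply IH. intros u Hu. apply (H (S u)). simpl in *; lia.
Qed.

Lemma nth_last_eq {A : Type} : forall (rest : list A) x d,
  nth (length rest) (x :: rest) d = last (x :: rest) d.
Proof.
  induction rest as [|y rest IH]; intros x d; [reflexivity|].
  change (last (x::y::rest) d) with (last (y::rest) d). rewrite <- IH. reflexivity.
Qed.

Lemma chain_enc : forall rest x a b a' b', chain x rest -> x = (a, b) ->
  last (x :: rest) (0%nat, 0%nat) = (a', b') ->
  exists bs, (a <= a')%nat /\ (a + b + length bs = a' + b' + 1)%nat /\
    (b + length (decode a bs) = S b')%nat /\
    (forall v, In v (decode a bs) -> (v <= a')%nat) /\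
    (forall idx, (idx < length (decode a bs))%nat ->
       In (nth idx (decode a bs) 0%nat, (b + idx)%nat) (x :: rest)).
Proof.
  induction rest as [|y rest IH]; intros x a b a' b' Hc Hx Hl.
  - simpl in Hl. subst x. inversion Hl; subst.
    exists [true]; simpl. split; [lia|]. split; [lia|]. split; [lia|]. split.
    + intros v [<-|[]]; lia.
    + intros idx Hi. assert (idx = 0%nat) by lia. subst. left. f_equal; lia.
  - destruct Hc as [Hs Hc]. subst x. destruct y as [a2 b2].
    simpl in Hs. change (last ((a2, b2) :: rest) (0%nat, 0%nat) = (a', b')) in Hl.
    destruct (IH (a2, b2) a2 b2 a' b' Hc eq_refl Hl) as
      [bs [H1 [H2 [H3 [H4 H5]]]]].
    destruct Hs as [[Ha|Ha] [[Hb|Hb] Hsum]]; subst; try lia.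
    + exists (true :: bs). simpl. split; [lia|]. split; [lia|]. split; [lia|]. split.
      * intros v [<-|Hv]; [lia|auto].
      * intros [|idx] Hi; simpl. { left; f_equal; lia. }
        right. replace (b + S idx)%nat with (S b + idx)%nat by lia. apply H5; simpl in Hi; lia.
    + exists (false :: bs). simpl. split; [lia|]. split; [lia|]. split; [lia|]. split; [auto|].
      intros idx Hi. right. apply H5; auto.
    + exists (true :: false :: bs). simpl. split; [lia|]. split; [lia|]. split; [lia|]. split.
      * intros v [<-|Hv]; [lia|auto].
      * intros [|idx] Hi; simpl. { left; f_equal; lia. }
        right. replace (b + S idx)%nat with (S b + idx)%nat by lia. apply H5; simpl in Hi; lia.
Qed.
Lemma min_exists : forall (V : list R) (P : R -> Prop), (exists v, In v V /\ P v) ->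
  exists v0, P v0 /\ In v0 V /\ forall v, In v V -> P v -> v0 <= v.
Proof.
  induction V as [|a V IH]; intros P [v [Hv HP]]; [destruct Hv|].
  destruct (classic (exists v, In v V /\ P v)) as [Hex|Hno].
  - destruct (IH P Hex) as [v0 [H1 [H2 H3]]].
    destruct (classic (P a /\ a < v0)) as [[Pa Hlt]|Hn].
    + exists a. split; auto. split; [left; auto|].
      intros w [<-|Hw] Pw; [lra|]. specialize (H3 w Hw Pw); lra.
    + exists v0. split; auto. split; [right; auto|].
      intros w [->|Hw] Pw; [|auto]. destruct (Rlt_le_dec w v0); auto. exfalso; auto.
  - destruct Hv as [<-|Hv]; [|exfalso; eauto].
    exists a. split; auto. split; [left; auto|].
    intros w [<-|Hw] Pw; [lra|]. exfalso; eauto.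
Qed.

Lemma fold_in (f : nat * nat -> R) (G : list (nat * nat)) :
  (forall x, f x = 0 \/ In (f x) (map f G)) ->
  forall t, In (fold_right Rmax 0 (map f t)) (0 :: map f G).
Proof.
  intros Hf t; induction t as [|x t IH]; [left; auto|].
  change (fold_right Rmax 0 (map f (x::t))) with (Rmax (f x) (fold_right Rmax 0 (map f t))).
  apply Rmax_case; [|exact IH].
  destruct (Hf x) as [H|H]; [left; auto|right; auto].
Qed.

Lemma pt_in {T : Type} (d : T -> T -> R) (p q : list T) (x : nat * nat) :
  pt_dist d p q x = 0 \/
  In (pt_dist d p q x) (map (pt_dist d p q) (list_prod (seq 0 (length p)) (seq 0 (length q)))).
Proof.
  destruct x as [i j]. unfold pt_dist at 1 2. simpl.
  destruct (nth_error p i) eqn:E1; [|left; auto].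
  destruct (nth_error q j) eqn:E2; [|left; auto].
  right. assert (Hi : (i < length p)%nat) by (apply nth_error_Some; congruence).
  assert (Hj : (j < length q)%nat) by (apply nth_error_Some; congruence).
  replace (d t t0) with (pt_dist d p q (i, j)) by (unfold pt_dist; simpl; rewrite E1, E2; auto).
  apply in_map. apply in_prod; apply in_seq; lia.
Qed.

Lemma dF_of_trav {T : Type} (d : T -> T -> R) (p q : list T) (s : R) (t : list (nat*nat)) :
  is_traversal p q t -> traversal_cost d p q t <= s -> dF_le d p q s.
Proof.
  intros Ht Hc.
  set (V := 0 :: map (pt_dist d p q) (list_prod (seq 0 (length p)) (seq 0 (length q)))).
  assert (HV : forall t, In (traversal_cost d p q t) V).
  { intro t'. unfold traversal_cost, V. apply fold_in. intro; apply pt_in. }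
  set (P := fun v => exists t, is_traversal p q t /\ traversal_cost d p q t = v).
  destruct (min_exists V P) as [v0 [H1 [H2 H3]]].
  { exists (traversal_cost d p q t). split; auto. exists t; auto. }
  exists v0. split.
  - split; [exact H1|]. intros t' Ht'. apply H3; auto. exists t'; auto.
  - assert (v0 <= traversal_cost d p q t) by (apply H3; auto; exists t; auto). lra.
Qed.

Lemma fold_le (l : list R) (s : R) : (forall x, In x l -> x <= s) -> 0 <= s ->
  fold_right Rmax 0 l <= s.
Proof.
  intros H Hs; induction l as [|a l IH]; simpl; auto.
  apply Rmax_lub; [apply H; left; auto| apply IH; intros; apply H; right; auto].
Qed.

Lemma pt_le_cost {T : Type} (d : T -> T -> R) (p q : list T) (t : list (nat*nat)) x :
  In x t -> pt_dist d p q x <= traversal_cost d p q t.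
Proof.
  unfold traversal_cost. induction t as [|y t IH]; intros Hin; [destruct Hin|].
  destruct Hin as [<-|H]; simpl.
  - apply Rmax_l.
  - eapply Rle_trans; [apply IH; auto|apply Rmax_r].
Qed.

Lemma diag_trav {T : Type} (d : T -> T -> R) (c q : list T) (s : R) :
  (1 <= length c)%nat -> length c = length q -> 0 <= s ->
  (forall j, (j < length c)%nat -> pt_dist d c q (j, j) <= s) -> dF_le d c q s.
Proof.
  intros H1 Hl Hs H.
  set (m := length c) in *.
  set (t := map (fun j => (j, j)) (seq 0 m)).
  assert (Hn : forall u, (u < m)%nat -> nth u t (0%nat, 0%nat) = (u, u)).
  { intros u Hu. unfold t. change (0%nat, 0%nat) with ((fun j : nat => (j, j)) 0%nat).
    rewrite map_nth. rewrite seq_nth; auto. }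
  assert (Hlt : length t = m) by (unfold t; rewrite length_map, length_seq; auto).
  apply (dF_of_trav d c q s t).
  - split; [|split; [|split]].
    + intro E. rewrite E in Hlt. simpl in Hlt. lia.
    + apply Hn; lia.
    + rewrite Hlt, Hn by lia. fold m. rewrite <- Hl. auto.
    + intros u Hu. rewrite Hlt in Hu. rewrite (Hn u) by lia. rewrite (Hn (S u)) by lia. lia.
  - unfold traversal_cost. apply fold_le; auto.
    intros x Hx. apply in_map_iff in Hx. destruct Hx as [y [<- Hy]].
    unfold t in Hy. apply in_map_iff in Hy. destruct Hy as [j [<- Hj]].
    apply in_seq in Hj. apply H. lia.
Qed.

Lemma choose_list (P : nat -> nat -> Prop) : forall n,
  (forall j, (j < n)%nat -> exists k, P j k) ->
  exists ks, length ks = n /\ forall j, (j < n)%nat -> P j (nth j ks 0%nat).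
Proof.
  induction n as [|n IH]; intros H.
  - exists []; split; auto; intros; lia.
  - destruct IH as [ks [H1 H2]]. { intros; apply H; lia. }
    destruct (H n) as [k Hk]; [lia|].
    exists (ks ++ [k]). split; [rewrite length_app; simpl; lia|].
    intros j Hj. destruct (Nat.eq_dec j n) as [->|Hne].
    + rewrite app_nth2 by lia. rewrite H1, Nat.sub_diag. auto.
    + rewrite app_nth1 by lia. apply H2; lia.
Qed.
Theorem mainTheorem13 (T : Type) (d : T -> T -> R) (lam : nat)
  (hd : is_metric d) (hlam : is_doubling_constant d lam)
  (m : nat) (hm : (1 <= m)%nat) (r : R) (hr : 0 < r)
  (p : list T) (hp : length p = m) :
  exists cs : list (list T),
    (length cs <= (4 * lam) ^ m)%nat /\
    (forall c, In c cs -> length c = m) /\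
    forall q : list T, length q = m ->
      dF_le d p q r ->
      exists c, In c cs /\ dF_le d c q (r / 2).
Proof.
  destruct p as [|x0 p']; [simpl in hp; lia|].
  set (p := x0 :: p') in *.
  assert (HC : forall x, {cs : list T | (length cs <= lam)%nat /\
      forall y, d x y <= r -> exists c, In c cs /\ d c y <= r / 2}).
  { intro x. apply constructive_indefinite_description. apply (proj1 hlam x r hr). }
  set (Ctr := fun x => proj1_sig (HC x)).
  assert (HC1 : forall x, (length (Ctr x) <= lam)%nat) by (intro x; apply (proj2_sig (HC x))).
  assert (HC2 : forall x y, d x y <= r -> exists c, In c (Ctr x) /\ d c y <= r / 2)
    by (intro x; apply (proj2_sig (HC x))).
  set (mk := fun (bs : list bool) (ks : list nat) =>
    map (fun j => nth (nth j ks 0%nat) (Ctr (nth (nth j (decode 0 bs) 0%nat) p x0)) x0) (seq 0 m)).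
  exists (flat_map (fun bs => map (mk bs) (all_seqs (seq 0 lam) m)) (all_seqs [false; true] (2 * m))).
  split; [|split].
  - rewrite (flat_map_len _ (lam ^ m)%nat).
    + rewrite all_seqs_len. simpl length. rewrite Nat.pow_mul_r, Nat.pow_mul_l. simpl. lia.
    + intro bs. rewrite length_map, all_seqs_len, length_seq. auto.
  - intros c Hc. apply in_flat_map in Hc. destruct Hc as [bs [_ Hc]].
    apply in_map_iff in Hc. destruct Hc as [ks [<- _]].
    unfold mk. rewrite length_map, length_seq. auto.
  - intros q Hq [x [[[t [Ht Htc]] _] Hxr]].
    destruct Ht as [Hne [H0 [Hlast Hstep]]].
    destruct t as [|x1 rest]; [congruence|]. simpl in H0. subst x1.
    assert (Hch : chain (0%nat, 0%nat) rest) by (apply nth_chain; exact Hstep).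
    assert (Hl : last ((0%nat, 0%nat) :: rest) (0%nat, 0%nat) = (m - 1, m - 1)%nat).
    { rewrite <- nth_last_eq.
      replace (length rest) with (length ((0%nat, 0%nat) :: rest) - 1)%nat by (simpl; lia).
      rewrite Hlast. fold p. rewrite hp, Hq. auto. }
    destruct (chain_enc rest (0%nat, 0%nat) 0 0 (m-1) (m-1) Hch eq_refl Hl)
      as [bs0 [_ [B2 [B3 [B4 B5]]]]].
    set (L := decode 0 bs0) in *.
    set (bs := bs0 ++ repeat false (2 * m - length bs0)).
    assert (HL : decode 0 bs = L) by (apply decode_pad).
    assert (Hcost : traversal_cost d p q ((0%nat, 0%nat) :: rest) <= r) by lra.
    assert (Hk : forall j, (j < m)%nat -> exists k,
       (k < lam)%nat /\ d (nth k (Ctr (nth (nth j L 0%nat) p x0)) x0) (nth j q x0) <= r / 2).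
    { intros j Hj.
      assert (Hin := B5 j ltac:(lia)). rewrite Nat.add_0_l in Hin.
      assert (Hi : (nth j L 0 <= m - 1)%nat) by (apply B4; apply nth_In; lia).
      assert (Hpt := pt_le_cost d p q _ _ Hin).
      unfold pt_dist in Hpt. simpl in Hpt.
      rewrite (nth_error_nth' p (n:=nth j L 0%nat) x0) in Hpt by lia.
      rewrite (nth_error_nth' q (n:=j) x0) in Hpt by lia.
      destruct (HC2 _ _ (Rle_trans _ _ _ Hpt Hcost)) as [c [Hc1 Hc2]].
      destruct (In_nth _ _ x0 Hc1) as [k [Hk1 Hk2]].
      exists k. split; [specialize (HC1 (nth (nth j L 0%nat) p x0)); lia|]. rewrite Hk2; auto. }
    destruct (choose_list _ m Hk) as [ks [Hks1 Hks2]].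
    exists (mk bs ks). split.
    + apply in_flat_map. exists bs. split.
      * apply all_seqs_in.
        -- unfold bs. rewrite length_app, repeat_length. lia.
        -- intros b _. destruct b; simpl; auto.
      * apply in_map. apply all_seqs_in; auto.
        intros k Hk'. destruct (In_nth _ _ 0%nat Hk') as [j [Hj <-]].
        apply in_seq. specialize (Hks2 j ltac:(lia)). lia.
    + apply diag_trav.
      * unfold mk. rewrite length_map, length_seq. auto.
      * unfold mk. rewrite length_map, length_seq. auto.
      * lra.
      * intros j Hj. unfold mk in Hj. rewrite length_map, length_seq in Hj.
        unfold pt_dist. simpl. unfold mk. rewrite nth_error_map, nth_error_seq.
        replace (j <? m)%nat with true by (symmetry; apply Nat.ltb_lt; auto). simpl.
        rewrite (nth_error_nth' q (n:=j) x0) by lia. rewrite HL.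
        apply Hks2; auto.
Qed.
Print Assumptions mainTheorem13.
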